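(* Let $(V,\nu,\tau,\tau^* )$ be a finite dimensional PN space such that $\tau^*$ is Archimedean, $\nu_p\neq\varepsilon_\infty$ for every $p\in V$, $\nu(V)\subseteq D^+$ and $\tau(D^+\times D^+)\subseteq D^+$, where the real scalar field is regarded as a PN space $(\mathbb{R},\nu',\tau',\tau'^{*})$ with $\tau'^{*}$ Archimedean, $\nu'_r\neq\varepsilon_\infty$ for all $r\in\mathbb{R}$, and $\nu'$ having the LG-property (for every $x>0$, $\lim_{r\to\infty}\nu'_r(x)=0$). Then a subset $A$ of $V$ is $D$-compact if and only if $A$ is $D$-bounded and closed (in the strong topology).
   Context: $\Delta^{+}$ is the set of functions $F:[-\infty,+\infty]\to[0,1]$ that are left-continuous on $\mathbb{R}$, nondecreasing, with $F(0)=0$ and $F(+\infty)=1$, ordered pointwise; $D^{+}=\{F\in\Delta^{+}: l^{-}F(+\infty)=1\}$, where $l^{-}f(x)=\lim_{t\to x^{-}}f(t)$. $\varepsilon_0$ is the d.f. equal to $0$ for $x\le0$ and $1$ for $x>0$; $\varepsilon_\infty$ is the d.f. equal to $0$ on all of $\mathbb{R}$. A triangle function is a map $\tau:\Delta^+\times\Delta^+\to\Delta^+$ that is associative, commutative, nondecreasing in each argument, with unit $\varepsilon_0$; it is Archimedean if its only idempotents are $\varepsilon_0$ and $\varepsilon_\infty$. A PN space is a quadruple $(V,\nu,\tau,\tau^* )$ with $V$ a real vector space, $\tau\le\tau^*$ continuous triangle functions, and $\nu:V\to\Delta^+$ such that for all $p,q\in V$: (N1) $\nu_p=\varepsilon_0$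 iff $p=\theta$; (N2) $\nu_{-p}=\nu_p$; (N3) $\nu_{p+q}\ge\tau(\nu_p,\nu_q)$; (N4) $\nu_p\le\tau^*(\nu_{\lambda p},\nu_{(1-\lambda)p})$ for all $\lambda\in[0,1]$. The strong topology is generated by $N_p(\lambda)=\{q:\nu_{p-q}(\lambda)>1-\lambda\}$, $\lambda>0$; $(p_m)$ strongly converges to $p$ if for every $\lambda>0$ eventually $p_m\in N_p(\lambda)$. For nonempty $A\subseteq V$, $R_A(x)=l^{-}\inf\{\nu_q(x):q\in A\}$ for $x\in[0,+\infty)$, $R_A(+\infty)=1$; $A$ is $D$-bounded if $R_A\in D^+$. $A$ is $D$-compact if every sequence in $A$ has a subsequence strongly converging to a vector of $A$. *)

(* Defs.v *)
From HB Require Import structures.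
From mathcomp Require Import all_boot all_order all_algebra.
From mathcomp Require Import all_classical all_reals all_analysis.
Set Implicit Arguments. Unset Strict Implicit. Unset Printing Implicit Defensive.
Import Order.TTheory GRing.Theory Num.Theory.
Import numFieldNormedType.Exports.
Local Open Scope classical_set_scope.
Local Open Scope ring_scope.

Section PN.
Variable R : realType.

(* A distance distribution function F : [-oo,+oo] -> [0,1] is represented by
   its restriction to the real line; the values F(-oo) = 0 and F(+oo) = 1 are
   fixed by convention and carry no information. *)

Definition in_Delta (F : R -> R) : Prop :=
  [/\ (forall x, 0 <= F x <= 1),
      (forall x y, x <= y -> F x <= F y),
      F 0 = 0 &
      (forall x, F t @[t --> x^'-] --> F x)].

Definition in_Dplus (F : R -> R) : Prop :=
  in_Delta F /\ (F x @[x --> +oo] --> (1 : R)).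

Definition eps0 : R -> R := fun x => if 0 < x then 1 else 0.
Definition epsinf : R -> R := fun _ => 0.

(** pointwise order on Delta^+ (at +oo all d.f.s equal 1) *)
Definition dfle (F G : R -> R) : Prop := forall x, F x <= G x.

(** Weak convergence of d.f.s: convergence at every continuity point of the
    limit (this is the topology of the modified Levy / Sibley metric on
    Delta^+, in which continuity of triangle functions is meant). *)
Definition wconv (Fn : nat -> R -> R) (F : R -> R) : Prop :=
  forall x, {for x, continuous F} -> Fn n x @[n --> \oo] --> F x.

Definition triangle_function (tau : (R -> R) -> (R -> R) -> (R -> R)) : Prop :=
  [/\ (forall F G, in_Delta F -> in_Delta G -> in_Delta (tau F G)),
      (forall F G H, in_Delta F -> in_Delta G -> in_Delta H ->
          tau (tau F G) H = tau F (tau G H)),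
      (forall F G, in_Delta F -> in_Delta G -> tau F G = tau G F),
      (forall F F' G, in_Delta F -> in_Delta F' -> in_Delta G ->
          dfle F F' -> dfle (tau F G) (tau F' G) /\ dfle (tau G F) (tau G F')) &
      (forall F, in_Delta F -> tau F eps0 = F)].

Definition continuous_tf (tau : (R -> R) -> (R -> R) -> (R -> R)) : Prop :=
  forall (Fn Gn : nat -> R -> R) (F G : R -> R),
    (forall n, in_Delta (Fn n)) -> (forall n, in_Delta (Gn n)) ->
    in_Delta F -> in_Delta G ->
    wconv Fn F -> wconv Gn G ->
    wconv (fun n => tau (Fn n) (Gn n)) (tau F G).

Definition archimedean_tf (tau : (R -> R) -> (R -> R) -> (R -> R)) : Prop :=
  forall F, in_Delta F -> tau F F = F -> F = eps0 \/ F = epsinf.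

Definition PN_space (V : lmodType R) (nu : V -> R -> R)
    (tau taus : (R -> R) -> (R -> R) -> (R -> R)) : Prop :=
  [/\ triangle_function tau, triangle_function taus,
      continuous_tf tau, continuous_tf taus &
      (forall F G, in_Delta F -> in_Delta G -> dfle (tau F G) (taus F G))] /\
  [/\ (forall p, in_Delta (nu p)),
      (forall p, nu p = eps0 <-> p = 0),
      (forall p, nu (- p) = nu p),
      (forall p q, dfle (tau (nu p) (nu q)) (nu (p + q))) &
      (forall p (l : R), 0 <= l <= 1 ->
          dfle (nu p) (taus (nu (l *: p)) (nu ((1 - l) *: p))))].

Definition LG_property (nu' : R -> R -> R) : Prop :=
  forall x, 0 < x -> nu' r x @[r --> +oo] --> (0 : R).

Variable V : lmodType R.
Variable nu : V -> R -> R.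

Definition strong_nbhd (p : V) (l : R) : set V :=
  [set q | nu (p - q) l > 1 - l].

Definition strong_open (U : set V) : Prop :=
  forall p, U p -> exists2 l : R, 0 < l & strong_nbhd p l `<=` U.

Definition strong_closed (A : set V) : Prop := strong_open (~` A).

Definition strong_conv (u : nat -> V) (p : V) : Prop :=
  forall l : R, 0 < l -> exists N, forall m, (N <= m)%N -> strong_nbhd p l (u m).

Definition prob_radius (A : set V) : R -> R :=
  fun x => lim ((inf [set nu q t | q in A]) @[t --> x^'-]).

Definition D_bounded (A : set V) : Prop := in_Dplus (prob_radius A).

Definition D_compact (A : set V) : Prop :=
  forall u : nat -> V, (forall n, A (u n)) ->
    exists phi : nat -> nat, {homo phi : m n / (m < n)%N} /\
      exists2 p, A p & strong_conv (u \o phi) p.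

End PN.
Arguments eps0 {R}.
Arguments epsinf {R}.

(* Main.v *)
Require Import Defs.
From HB Require Import structures.
From mathcomp Require Import all_boot all_order all_algebra.
From mathcomp Require Import all_classical all_reals all_analysis.
Import Order.TTheory GRing.Theory Num.Theory.
Import numFieldNormedType.Exports.
Local Open Scope classical_set_scope.
Local Open Scope ring_scope.
Set Implicit Arguments. Unset Strict Implicit. Unset Printing Implicit Defensive.
From mathcomp Require Import lra.
Section Basics.
Variable R : realType.
Implicit Types F G H : R -> R.

Lemma D_ge0 F x : in_Delta F -> 0 <= F x.
Proof. by case=> /(_ x) /andP[]. Qed.
Lemma D_le1 F x : in_Delta F -> F x <= 1.
Proof. by case=> /(_ x) /andP[]. Qed.
Lemma D_mono F x y : in_Delta F -> x <= y -> F x <= F y.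
Proof. by case=> _ h _ _; exact: h. Qed.
Lemma D_neg F x : in_Delta F -> x <= 0 -> F x = 0.
Proof.
move=> hF x0; apply/eqP; rewrite eq_le D_ge0 // andbT.
by case: hF => _ h <- _; exact: h.
Qed.
Lemma D_le_eps0 F : in_Delta F -> dfle F eps0.
Proof.
move=> hF x; rewrite /eps0; case: ifP => [_|/negbT]; first exact: D_le1.
by rewrite -leNgt => /(D_neg hF) ->.
Qed.

Lemma eps0_Delta : in_Delta (@eps0 R).
Proof.
split.
- by move=> x; rewrite /eps0; case: ifP => _; rewrite ?lexx ?ler01.
- move=> x y xy; rewrite /eps0; case: ifP => x0; case: ifP => y0 //;
    rewrite ?ler01 //.
  by move: y0; rewrite (lt_le_trans x0 xy).
- by rewrite /eps0 ltxx.
- move=> x; have [x0|x0] := ltP 0 x.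
  + apply: cvg_near_cst; near=> t.
    have t0 : 0 < t by near: t; exact: nbhs_left_gt.
    by rewrite /eps0 x0 t0.
  + apply: cvg_near_cst; near=> t.
    have t0 : t < x by near: t; exact: nbhs_left_lt.
    have t0' : (0 < t) = false by apply/negbTE; rewrite -leNgt (le_trans (ltW t0) x0).
    by rewrite /eps0 t0' ifF // ltNge x0.
Unshelve. all: by end_near. Qed.

Definition step3 (a b c : R) : R -> R :=
  fun x => if x <= a then 0 else if x <= b then c else 1.

Lemma step3_Delta a b c : 0 <= a -> a <= b -> 0 <= c <= 1 -> in_Delta (step3 a b c).
Proof.
move=> a0 ab /andP[c0 c1]; split.
- by move=> x; rewrite /step3; case: ifP => _; [|case: ifP => _];
    rewrite ?lexx ?ler01 ?c0 ?c1.
- move=> x y xy; rewrite /step3; have [xa|xa] := leP x a.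
  + by case: ifP => _; [|case: ifP => _]; rewrite ?lexx ?c0 ?ler01.
  + have ya : (y <= a) = false by apply/negbTE; rewrite -ltNge (lt_le_trans xa xy).
    rewrite ya; have [yb|yb] := leP y b.
    * by rewrite (le_trans xy yb) lexx.
    * by case: ifP => _; rewrite ?c1 ?lexx.
- by rewrite /step3 a0.
- move=> x; rewrite /step3; have [xa|xa] := leP x a.
  + apply: cvg_near_cst; near=> t; rewrite ifT //.
    apply: (le_trans _ xa); apply/ltW; near: t; exact: nbhs_left_lt.
  + have [xb|xb] := leP x b.
    * apply: cvg_near_cst; near=> t; rewrite ifF ?ifT //.
      apply: (le_trans _ xb); apply/ltW; near: t; exact: nbhs_left_lt.
      apply/negbTE; rewrite -ltNge; near: t; exact: nbhs_left_gt.
    * apply: cvg_near_cst; near=> t; rewrite ifF ?ifF //;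
      apply/negbTE; rewrite -ltNge; near: t; exact: nbhs_left_gt.
Unshelve. all: by end_near. Qed.

Lemma near_gt (a x : R) : a < x -> \forall t \near x, a < t.
Proof.
move=> ax; have : x \in `]a, +oo[ by rewrite in_itv /= andbT.
by move/near_in_itvoy; apply: filterS => t; rewrite in_itv /= andbT.
Qed.
Lemma near_lt (a x : R) : x < a -> \forall t \near x, t < a.
Proof.
move=> ax; have : x \in `]-oo, a[ by rewrite in_itv /=.
by move/near_in_itvNyo; apply: filterS => t; rewrite in_itv /=.
Qed.

Lemma step3_cont a b c x : x != a -> x != b -> {for x, continuous (step3 a b c)}.
Proof.
move=> xa xb; rewrite /step3.
have [xa'|xa'] := ltP a x.
- have xa3 : (x <= a) = false by apply/negbTE; rewrite -ltNge.
  have [xb'|xb'] := ltP b x.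
  + have xb3 : (x <= b) = false by apply/negbTE; rewrite -ltNge.
    apply: cvg_near_cst; near=> t.
    have ta : (t <= a) = false.
      by apply/negbTE; rewrite -ltNge; near: t; exact: near_gt.
    have tb : (t <= b) = false.
      by apply/negbTE; rewrite -ltNge; near: t; exact: near_gt.
    by rewrite ta tb xa3 xb3.
  + have xb2 : x < b by rewrite lt_neqAle xb xb'.
    apply: cvg_near_cst; near=> t.
    have ta : (t <= a) = false.
      by apply/negbTE; rewrite -ltNge; near: t; exact: near_gt.
    have tb : (t <= b) by apply/ltW; near: t; exact: near_lt.
    by rewrite ta tb xa3 xb'.
- have xa2 : x < a by rewrite lt_neqAle xa xa'.
  apply: cvg_near_cst; near=> t.
  have ta : t <= a by apply/ltW; near: t; exact: near_lt.
  by rewrite ta xa'.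
Unshelve. all: by end_near. Qed.

End Basics.

Section TF.
Variable R : realType.
Implicit Types F G H : R -> R.
Variable tau : (R -> R) -> (R -> R) -> (R -> R).
Hypothesis tf : triangle_function tau.

Lemma tf_Delta F G : in_Delta F -> in_Delta G -> in_Delta (tau F G).
Proof. by case: tf => h *; exact: h. Qed.
Lemma tf_unitr F : in_Delta F -> tau F eps0 = F.
Proof. by case: tf => _ _ _ _ h; exact: h. Qed.
Lemma tf_unitl F : in_Delta F -> tau eps0 F = F.
Proof.
move=> hF; case: tf => _ _ hC _ _; rewrite hC //; last exact: eps0_Delta.
exact: tf_unitr.
Qed.
Lemma tf_comm F G : in_Delta F -> in_Delta G -> tau F G = tau G F.
Proof. by case: tf => _ _ h _ _; exact: h. Qed.
Lemma tf_assoc F G H : in_Delta F -> in_Delta G -> in_Delta H ->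
  tau (tau F G) H = tau F (tau G H).
Proof. by case: tf => _ h _ _ _; exact: h. Qed.
Lemma tf_mono F F' G G' : in_Delta F -> in_Delta F' -> in_Delta G -> in_Delta G' ->
  dfle F F' -> dfle G G' -> dfle (tau F G) (tau F' G').
Proof.
move=> hF hF' hG hG' FF' GG' x; case: tf => _ _ _ h _.
apply: (le_trans (proj1 (h _ _ _ hF hF' hG FF') x)).
exact: (proj2 (h _ _ _ hG hG' hF' GG') x).
Qed.
Lemma tf_lel F G : in_Delta F -> in_Delta G -> dfle (tau F G) G.
Proof.
move=> hF hG x; rewrite -{2}(tf_unitl hG).
by apply: (tf_mono hF (@eps0_Delta R) hG hG (D_le_eps0 hF)) => ?.
Qed.
Lemma tf_ler F G : in_Delta F -> in_Delta G -> dfle (tau F G) F.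
Proof. by move=> hF hG; rewrite tf_comm //; exact: tf_lel. Qed.

Fixpoint pw G (m : nat) : R -> R :=
  match m with 0%N => eps0 | m'.+1 => tau G (pw G m') end.

Lemma pw_Delta G m : in_Delta G -> in_Delta (pw G m).
Proof. by move=> hG; elim: m => [|m ih] /=; [exact: eps0_Delta|exact: tf_Delta]. Qed.

Lemma pw_add G a b : in_Delta G -> pw G (a + b) = tau (pw G a) (pw G b).
Proof.
move=> hG; elim: a => [|a ih]; first by rewrite add0n /= tf_unitl //; exact: pw_Delta.
by rewrite addSn /= ih tf_assoc //; exact: pw_Delta.
Qed.

Lemma pw_decr G m n : in_Delta G -> (m <= n)%N -> dfle (pw G n) (pw G m).
Proof.
move=> hG; elim: n => [|n ih]; first by rewrite leqn0 => /eqP -> x.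
rewrite leq_eqVlt => /orP[/eqP -> x //|]; rewrite ltnS => /ih h x.
by apply: le_trans (h x); apply: tf_lel => //; exact: pw_Delta.
Qed.

Lemma pw_mono F G m : in_Delta F -> in_Delta G -> dfle F G -> dfle (pw F m) (pw G m).
Proof.
move=> hF hG FG; elim: m => [|m ih] /=; first by move=> x.
by apply: tf_mono => //; exact: pw_Delta.
Qed.

End TF.

Section Dense.
Variable R : realType.

Lemma exists_cont (F : R -> R) (a b : R) : {homo F : x y / x <= y} -> a < b ->
  exists x, (a < x < b) /\ ({for x, continuous F}).
Proof.
move=> ndF ab; apply: contrapT => hn.
have sub : `]a, b[ `<=` [set x | x \in (`]a, b[) /\ discontinuity F x].
  move=> x xab; split; first by rewrite inE.
  have cl : cvg (F t @[t --> x^'-]).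
    apply: nondecreasing_at_left_is_cvgr; first by apply: nearW => y s t hs ht; exact: ndF.
    near=> y; exists (F x) => z [s] /=; rewrite in_itv /= => /andP[_ sx] <-.
    exact/ndF/ltW.
  have cr : cvg (F t @[t --> x^'+]).
    apply: nondecreasing_at_right_is_cvgr; first by apply: nearW => y s t hs ht; exact: ndF.
    near=> y; exists (F x) => z [s] /=; rewrite in_itv /= => /andP[xs _] <-.
    exact/ndF/ltW.
  split => //; apply/negP => /eqP heq; apply: hn; exists x; split.
    by move: xab; rewrite /= in_itv.
  have h1 : lim (F t @[t --> x^'-]) <= F x.
    apply: limr_le => //; near=> t; apply/ndF/ltW; near: t; exact: nbhs_left_lt.
  have h2 : F x <= lim (F t @[t --> x^'+]).
    apply: limr_ge => //; near=> t; apply/ndF/ltW; near: t; exact: nbhs_right_gt.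
  have e1 : lim (F t @[t --> x^'-]) = F x.
    by apply/eqP; rewrite eq_le h1 heq h2.
  have e2 : lim (F t @[t --> x^'+]) = F x by rewrite -heq.
  apply/left_right_continuousP; split.
    by rewrite -[X in _ --> X]e1.
  by rewrite -[X in _ --> X]e2.
have ct : countable `]a, b[.
  apply: sub_countable (subset_card_le sub) _.
  apply: discontinuity_countable => s t _ _; exact: ndF.
have := countable_lebesgue_measure0 ct.
rewrite lebesgue_measure_itv /= lte_fin ab => /eqP.
by rewrite -EFinD eqe subr_eq0 => /eqP ba; move: ab; rewrite ba ltxx.
Unshelve. all: by end_near. Qed.

End Dense.

Section Arch.
Variable R : realType.
Implicit Types F G : R -> R.
Variable tau : (R -> R) -> (R -> R) -> (R -> R).
Hypothesis tf : triangle_function tau.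
Hypothesis ct : continuous_tf tau.
Hypothesis ar : archimedean_tf tau.

Lemma arch_pw G x0 : in_Delta G -> 0 < x0 -> G x0 < 1 ->
  forall y e, 0 < e -> exists m, pw tau G m y < e.
Proof.
move=> hG x00 Gx0 y e e0.
pose H := pw tau G.
have HD m : in_Delta (H m) by exact: pw_Delta.
have Hdec z m n : (m <= n)%N -> H n z <= H m z by move=> mn; exact: pw_decr.
pose P z := inf (range (fun m => H m z)).
have Plb z : has_lbound (range (fun m => H m z)).
  by exists 0 => ww [m _ <-]; exact: D_ge0.
have Pne z : range (fun m => H m z) !=set0 by exists (H 0%N z), 0%N.
have HP z : (fun m => H m z) @ \oo --> P z.
  by apply: nonincreasing_cvgn => //; move=> m n mn; exact: Hdec.
have P_le z m : P z <= H m z by apply: ge_inf (Plb z) _ _; exists m.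
have P_ge0 z : 0 <= P z.
  by apply: lb_le_inf (Pne z) _ => ww [m _ <-]; exact: D_ge0.
have P_mono z z' : z <= z' -> P z <= P z'.
  move=> zz'; apply: lb_le_inf (Pne z') _ => ww [m _ <-].
  exact: le_trans (P_le z m) (D_mono (HD m) zz').
have P_le1 z : P z <= 1 by apply: le_trans (P_le z 0%N) _; exact: D_le1.
pose S x := [set P z | z in `]-oo, x[].
have Sne x : S x !=set0 by exists (P (x - 1)), (x - 1) => //=; rewrite in_itv /= ltrBlDr ltrDl.
have hsup x : has_sup (S x) by split => //; exists 1 => ww [z _ <-].
pose L x := sup (S x).
have L_ge z x : z < x -> P z <= L x.
  by move=> zx; apply: sup_upper_bound (hsup x) _ _; exists z => //; rewrite in_itv.
have L_le x c : (forall z, z < x -> P z <= c) -> L x <= c.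
  move=> h; apply: ge_sup (Sne x) _ => ww [z] /=; rewrite in_itv /= => zx <-.
  exact: h.
have L_leP x : L x <= P x by apply: L_le => z zx; apply: P_mono; exact: ltW.
have L_mono x x' : x <= x' -> L x <= L x'.
  by move=> xx'; apply: L_le => z zx; apply: L_ge; exact: lt_le_trans zx xx'.
have L_Delta : in_Delta L.
  split.
  - move=> x; apply/andP; split.
      by apply: le_trans (P_ge0 (x - 1)) (L_ge _ _ _); rewrite ltrBlDr ltrDl.
    exact: le_trans (L_leP x) (P_le1 x).
  - exact: L_mono.
  - apply/eqP; rewrite eq_le; apply/andP; split.
      apply: le_trans (L_leP 0) (le_trans (P_le 0 0%N) _).
      by rewrite /H /= /eps0 ltxx.
    by apply: le_trans (P_ge0 (-1)) (L_ge _ _ _); rewrite ltrN10.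
  - move=> x; apply/cvgrPdist_le => eps eps0.
    have [_ [z zx <-] hz] := sup_adherent eps0 (hsup x).
    move: zx; rewrite /= in_itv /= => zx.
    near=> t.
    have tz : z < t by near: t; exact: nbhs_left_gt.
    have tx : t < x by near: t; exact: nbhs_left_lt.
    have h1 := L_ge _ _ tz.
    have h2 := L_mono _ _ (ltW tx).
    rewrite ger0_norm ?subr_ge0 //.
    rewrite /L in h1 h2 hz *; lra.
have P_eq x : {for x, continuous L} -> P x = L x.
  move=> cx; apply/eqP; rewrite eq_le L_leP andbT.
  have [_ /= hr] := (left_right_continuousP L x).2 cx.
  apply: (ler_cvg_to (cvg_cst (P x)) hr).
  near=> t; apply: L_ge; near: t; exact: nbhs_right_gt.
have wH : wconv H L by move=> x cx; rewrite -P_eq //; exact: HP.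
pose K := tau L L.
have KD : in_Delta K by exact: tf_Delta.
have wK : wconv (fun m => H (m + m)%N) K.
  move=> x cx; have h := ct HD HD L_Delta L_Delta wH wH cx.
  suff -> : (fun m => H (m + m)%N x) = (fun m => tau (H m) (H m) x) by [].
  by apply/funext => m; rewrite /H pw_add.
have PK x : {for x, continuous K} -> P x = K x.
  move=> cx; have hK := wK x cx.
  apply/eqP; rewrite eq_le; apply/andP; split.
    apply: (ler_cvg_to (cvg_cst (P x)) hK); apply: nearW => m; exact: P_le.
  apply: (ler_cvg_to hK (HP x)); apply: nearW => m; apply: Hdec; exact: leq_addr.
have LK : L = K.
  apply/funext => x; apply/eqP; rewrite eq_le; apply/andP; split.
    apply: L_le => z zx.
    have [w [/andP[zw wx] cw]] := exists_cont (fun a b ab => D_mono KD ab) zx.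
    rewrite (le_trans (P_mono _ _ (ltW zw))) // PK //; exact: D_mono KD (ltW wx).
  have hK : K t @[t --> x^'-] --> K x by case: KD => _ _ _; apply.
  apply: (ler_cvg_to hK (cvg_cst (L x))).
  near=> t.
  have tx : t < x by near: t; exact: nbhs_left_lt.
  have [w [/andP[tw wx] cw]] := exists_cont (fun a b ab => D_mono KD ab) tx.
  rewrite (le_trans (D_mono KD (ltW tw))) // -PK //; exact: L_ge.
have [Le|Le] := ar L_Delta (esym LK).
- exfalso.
  have : L x0 <= G x0.
    apply: le_trans (L_leP x0) (le_trans (P_le x0 1%N) _).
    by rewrite /H /= tf_unitr.
  by rewrite Le /eps0 x00; lra.
- have Py : P y = 0.
    apply/eqP; rewrite eq_le P_ge0 andbT.
    have := L_ge y (y + 1); rewrite Le /epsinf; apply; by rewrite ltrDl ltr01.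
  have [N _ hN] := (cvgrPdist_lt _ _).1 (HP y) e e0.
  exists N; have := hN N (leqnn N); rewrite /= Py sub0r normrN.
  by rewrite ger0_norm //; exact: D_ge0.
Unshelve. all: by end_near. Qed.

End Arch.

Section PN.
Variable R : realType.
Variable V : lmodType R.
Variable nu : V -> R -> R.
Variables tau taus : (R -> R) -> (R -> R) -> (R -> R).
Hypothesis PN : PN_space nu tau taus.

Let tfT : triangle_function tau. Proof. by case: PN => -[]. Qed.
Let tfS : triangle_function taus. Proof. by case: PN => -[]. Qed.
Let ctT : continuous_tf tau. Proof. by case: PN => -[]. Qed.
Let ctS : continuous_tf taus. Proof. by case: PN => -[]. Qed.

Lemma nu_Delta p : in_Delta (nu p). Proof. by case: PN => _ []. Qed.
Lemma nu_eps0 p : nu p = eps0 <-> p = 0. Proof. by case: PN => _ []. Qed.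
Lemma nu0 : nu 0 = eps0. Proof. exact/nu_eps0. Qed.
Lemma nuN p : nu (- p) = nu p. Proof. by case: PN => _ []. Qed.
Lemma nu_subC p q : nu (p - q) = nu (q - p). Proof. by rewrite -opprB nuN. Qed.
Lemma nuN3 p q : dfle (tau (nu p) (nu q)) (nu (p + q)). Proof. by case: PN => _ []. Qed.
Lemma nuN4 p (l : R) : 0 <= l <= 1 -> dfle (nu p) (taus (nu (l *: p)) (nu ((1 - l) *: p))).
Proof. by case: PN => _ [] _ _ _ _; apply. Qed.

Lemma nu_scale_le p s : 0 <= s <= 1 -> dfle (nu p) (nu (s *: p)).
Proof.
move=> hs x; apply: le_trans (nuN4 p hs x) _.
by apply: tf_ler => //; exact: nu_Delta.
Qed.

Lemma nu_mul_le q m : dfle (nu (m%:R *: q)) (pw taus (nu q) m).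
Proof.
elim: m => [|m ih]; first by rewrite scale0r nu0 => x.
have m1 : (m.+1%:R : R) != 0 by rewrite pnatr_eq0.
set l := (m.+1%:R)^-1 : R.
have hl : 0 <= l <= 1.
  by rewrite /l invr_ge0 ler0n /= invf_le1 ?ltr0n // ler1n.
move=> x; apply: le_trans (nuN4 _ hl x) _.
have e1 : l *: (m.+1%:R *: q) = q by rewrite scalerA mulVf // scale1r.
have e2 : (1 - l) *: (m.+1%:R *: q) = m%:R *: q.
  by rewrite scalerA mulrBl mul1r mulVf // -addn1 natrD addrK.
rewrite e1 e2 /=.
exact: (tf_mono tfS (nu_Delta q) (nu_Delta q) (nu_Delta _)
  (pw_Delta tfS m (nu_Delta q)) (fun z => lexx _) ih).
Qed.

Lemma nu_pw p (t : R) m : 0 < t -> m%:R * t <= 1 ->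
  dfle (nu p) (pw taus (nu (t *: p)) m).
Proof.
move=> t0 mt x; have hs : 0 <= m%:R * t <= 1 by rewrite mt andbT mulr_ge0 // ltW.
apply: le_trans (nu_scale_le p hs x) _.
by rewrite -scalerA; exact: nu_mul_le.
Qed.

Definition conv0 (f : nat -> V) := forall x d : R, 0 < x -> 0 < d ->
  exists N, forall n, (N <= n)%N -> 1 - d < nu (f n) x.

Lemma eps0_step : (@eps0 R) = step3 0 0 1.
Proof.
by apply/funext => x; rewrite /eps0 /step3; case: ltP.
Qed.

Lemma eps0_cont x : x != 0 -> {for x, continuous (@eps0 R)}.
Proof. by move=> x0; rewrite eps0_step; exact: step3_cont. Qed.

Lemma conv0_wconv f : conv0 f -> wconv (fun n => nu (f n)) eps0.
Proof.
move=> hf x _; have [x0|x0] := ltP 0 x.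
  apply/cvgrPdist_le => e e0; have [N hN] := hf x e x0 e0.
  near=> n; have Nn : (N <= n)%N by near: n; exact: nbhs_infty_ge.
  have := hN n Nn; have := D_le1 x (nu_Delta (f n)).
  move=> h1 h2; rewrite /eps0 x0 ger0_norm; [by rewrite lerBlDr addrC -lerBlDr ltW|by rewrite subr_ge0].
apply: cvg_near_cst; apply: nearW => n.
by rewrite (D_neg (nu_Delta _) x0) /eps0 ltNge x0.
Unshelve. all: by end_near. Qed.

Lemma wconv_conv0 f (G : nat -> R -> R) : (forall n, dfle (G n) (nu (f n))) ->
  wconv G eps0 -> conv0 f.
Proof.
move=> GF hG x d x0 d0.
have := hG x (eps0_cont (lt0r_neq0 x0)); rewrite /eps0 x0.
move=> /cvgrPdist_lt /(_ d d0) [N _ hN]; exists N => n Nn.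
have := hN n Nn; have := GF n x; move=> /= h1 h2.
have : 1 - G n x <= `|1 - G n x| by exact: ler_norm.
lra.
Qed.

Lemma conv0_add f g : conv0 f -> conv0 g -> conv0 (fun n => f n + g n).
Proof.
move=> hf hg; apply: (@wconv_conv0 _ (fun n => tau (nu (f n)) (nu (g n)))).
  move=> n; exact: nuN3.
have := ctT (fun n => nu_Delta (f n)) (fun n => nu_Delta (g n)) (@eps0_Delta R)
  (@eps0_Delta R) (conv0_wconv hf) (conv0_wconv hg).
by rewrite tf_unitl //; exact: eps0_Delta.
Qed.

Lemma conv0_opp f : conv0 f -> conv0 (fun n => - f n).
Proof. by move=> hf x d x0 d0; have [N hN] := hf x d x0 d0; exists N => n /hN; rewrite nuN. Qed.

Lemma conv0_cst0 : conv0 (fun _ => 0).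
Proof. by move=> x d x0 d0; exists 0%N => n _; rewrite nu0 /eps0 x0; lra. Qed.

Lemma conv0_ext f g : (forall n, f n = g n) -> conv0 f -> conv0 g.
Proof. by move=> e hf x d x0 d0; have [N hN] := hf x d x0 d0; exists N => n /hN; rewrite e. Qed.

Lemma conv0_eq0 q : conv0 (fun _ => q) -> q = 0.
Proof.
move=> hq; apply/nu_eps0/funext => x; rewrite /eps0.
have [x0|x0] := ltP 0 x; last exact: D_neg (nu_Delta q) x0.
apply/eqP; rewrite eq_le D_le1 /=; last exact: nu_Delta.
rewrite leNgt; apply/negP => h.
have d0 : 0 < 1 - nu q x by rewrite subr_gt0.
have [N hN] := hq x _ x0 d0; have := hN N (leqnn N); lra.
Qed.

Lemma strong_conv0 (u : nat -> V) p : strong_conv nu u p <-> conv0 (fun n => p - u n).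
Proof.
split.
- move=> hs x d x0 d0; set l := Num.min x d.
  have l0 : 0 < l by rewrite lt_min x0 d0.
  have [N hN] := hs l l0; exists N => n /hN; rewrite /strong_nbhd /= => h.
  have lx : l <= x by rewrite ge_min lexx.
  have ld : l <= d by rewrite ge_min lexx orbT.
  have := D_mono (nu_Delta (p - u n)) lx; lra.
- move=> hc l l0; have [N hN] := hc l l l0 l0; exists N => n /hN.
  by rewrite /strong_nbhd.
Qed.

Lemma homo_ge (phi : nat -> nat) : {homo phi : m n / (m < n)%N} -> forall n, (n <= phi n)%N.
Proof.
move=> h; elim=> [|n ih] //; apply: leq_ltn_trans ih (h _ _ _); exact: ltnSn.
Qed.

Lemma conv0_sub f (phi : nat -> nat) : {homo phi : m n / (m < n)%N} ->
  conv0 f -> conv0 (f \o phi).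
Proof.
move=> hphi hf x d x0 d0; have [N hN] := hf x d x0 d0; exists N => n Nn.
by apply: hN; apply: leq_trans Nn (homo_ge hphi n).
Qed.

Lemma strong_unique (u : nat -> V) p a : strong_conv nu u p -> strong_conv nu u a -> p = a.
Proof.
move=> /strong_conv0 hp /strong_conv0 ha; apply/eqP; rewrite -subr_eq0; apply/eqP.
apply: conv0_eq0; apply: conv0_ext (conv0_add hp (conv0_opp ha)) => n.
by rewrite opprB addrA subrK.
Qed.

Hypothesis archS : archimedean_tf taus.

Lemma tv_pos p x d : nu p <> epsinf -> 0 < x -> 0 < d -> d <= 1 ->
  exists2 eta : R, 0 < eta & forall s, 0 < s -> s < eta -> 1 - d < nu (s *: p) x.
Proof.
move=> np x0 d0 d1.
have [y py] : exists y, 0 < nu p y.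
  apply: contrapT => hn; apply: np; apply/funext => y; rewrite /epsinf.
  apply/eqP; rewrite eq_le (D_ge0 y (nu_Delta p)) andbT leNgt; apply/negP => h.
  by apply: hn; exists y.
pose G := step3 0 x (1 - d).
have GD : in_Delta G by apply: step3_Delta => //; [exact: ltW | apply/andP; split; lra].
have Gx : G x < 1 by rewrite /G /step3 ifF ?lexx; [lra|apply/negbTE; rewrite -ltNge].
have [m hm] := arch_pw tfS ctS archS GD x0 Gx y py.
exists (m.+1%:R)^-1; first by rewrite invr_gt0 ltr0n.
move=> s s0 sm; rewrite ltNge; apply/negP => hle.
have hG : dfle (nu (s *: p)) G.
  move=> z; rewrite /G /step3; case: ifP => z0; first by rewrite (D_neg (nu_Delta _) z0).
  case: ifP => zx; first exact: le_trans (D_mono (nu_Delta _) zx) hle.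
  exact: D_le1 (nu_Delta _).
have ms : m.+1%:R * s <= 1.
  by rewrite mulrC -ler_pdivlMr ?ltr0n // div1r ltW.
have := nu_pw p s0 ms y.
move=> h1; have h2 := pw_mono tfS (m.+1) (nu_Delta _) GD hG y.
have h3 := pw_decr tfS GD (leqnSn m) y.
have := le_trans h1 (le_trans h2 h3); lra.
Qed.

Lemma tv p (t : nat -> R) : nu p <> epsinf -> t n @[n --> \oo] --> 0 ->
  conv0 (fun n => t n *: p).
Proof.
move=> np ht x d x0 d0.
have [d1|d1] := leP d 1; last first.
  by exists 0%N => n _; have := D_ge0 x (nu_Delta (t n *: p)); lra.
have [eta eta0 heta] := tv_pos np x0 d0 d1.
have [N _ hN] := (cvgrPdist_lt _ _).1 ht eta eta0.
exists N => n Nn; have := hN n Nn; rewrite /= sub0r normrN => htn.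
have [tn0|tn0|tn0] := ltgtP (t n) 0.
- rewrite -nuN -scaleNr; apply: heta; first by rewrite oppr_gt0.
  by move: htn; rewrite ltr0_norm.
- by apply: heta => //; move: htn; rewrite gtr0_norm.
- by rewrite tn0 scale0r nu0 /eps0 x0; lra.
Qed.

End PN.

Section Step2.
Variable R : realType.
Definition step2 (a c : R) : R -> R := fun x => if x <= a then 0 else c.

Lemma step2_Delta a c : 0 <= a -> 0 <= c <= 1 -> in_Delta (step2 a c).
Proof.
move=> a0 /andP[c0 c1]; split.
- by move=> x; rewrite /step2; case: ifP => _; rewrite ?lexx ?ler01 ?c0 ?c1.
- move=> x y xy; rewrite /step2; have [xa|xa] := leP x a.
  + by case: ifP => _; rewrite ?lexx.
  + have ya : (y <= a) = false by apply/negbTE; rewrite -ltNge (lt_le_trans xa xy).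
    by rewrite ya.
- by rewrite /step2 a0.
- move=> x; rewrite /step2; have [xa|xa] := leP x a.
  + apply: cvg_near_cst; near=> t.
    have ta : t <= a by apply/ltW/(lt_le_trans _ xa); near: t; exact: nbhs_left_lt.
    by rewrite ta.
  + apply: cvg_near_cst; near=> t.
    have ta : (t <= a) = false.
      by apply/negbTE; rewrite -ltNge; near: t; exact: nbhs_left_gt.
    by rewrite ta.
Unshelve. all: by end_near. Qed.

Lemma step2_cont a c x : a < x -> {for x, continuous (step2 a c)}.
Proof.
move=> ax; rewrite /step2.
have xa3 : (x <= a) = false by apply/negbTE; rewrite -ltNge.
apply: cvg_near_cst; near=> t.
have ta : (t <= a) = false.
  by apply/negbTE; rewrite -ltNge; near: t; exact: near_gt.
by rewrite ta xa3.
Unshelve. all: by end_near. Qed.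

Lemma left_sup (I : R -> R) x : {homo I : a b / a <= b} -> (forall t, 0 <= I t <= 1) ->
  I t @[t --> x^'-] --> sup [set I t | t in `]-oo, x[].
Proof.
move=> hI hb; set S := [set I t | t in `]-oo, x[].
have Sne : S !=set0 by exists (I (x - 1)), (x - 1) => //=; rewrite in_itv /= ltrBlDr ltrDl.
have hs : has_sup S by split => //; exists 1 => w [z _ <-]; have /andP[] := hb z.
apply/cvgrPdist_le => eps eps0.
have [_ [z zx <-] hz] := sup_adherent eps0 hs.
move: zx; rewrite /= in_itv /= => zx.
near=> t.
have tz : z < t by near: t; exact: nbhs_left_gt.
have tx : t < x by near: t; exact: nbhs_left_lt.
have h1 := hI _ _ (ltW tz).
have h2 : I t <= sup S by apply: sup_upper_bound hs _ _; exists t => //=; rewrite in_itv.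
rewrite ger0_norm ?subr_ge0 //; lra.
Unshelve. all: by end_near. Qed.

Lemma leftsup_Delta (I : R -> R) : {homo I : a b / a <= b} -> (forall t, 0 <= I t <= 1) ->
  (forall t, t <= 0 -> I t = 0) -> in_Delta (fun x => sup [set I t | t in `]-oo, x[]).
Proof.
move=> hI hb h0.
have Sne x : [set I t | t in `]-oo, x[] !=set0.
  by exists (I (x - 1)), (x - 1) => //=; rewrite in_itv /= ltrBlDr ltrDl.
have hs x : has_sup [set I t | t in `]-oo, x[].
  by split => //; exists 1 => w [z _ <-]; have /andP[] := hb z.
have Lge z x : z < x -> I z <= sup [set I t | t in `]-oo, x[].
  by move=> zx; apply: sup_upper_bound (hs x) _ _; exists z => //=; rewrite in_itv.
have Lle x c : (forall z, z < x -> I z <= c) -> sup [set I t | t in `]-oo, x[] <= c.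
  move=> h; apply: ge_sup (Sne x) _ => w [z] /=; rewrite in_itv /= => zx <-.
  exact: h.
have Lmono x x' : x <= x' -> sup [set I t | t in `]-oo, x[] <= sup [set I t | t in `]-oo, x'[].
  by move=> xx'; apply: Lle => z zx; apply: Lge; exact: lt_le_trans zx xx'.
split.
- move=> x; apply/andP; split.
    apply: le_trans (Lge (x - 1) x _); first by have /andP[] := hb (x - 1).
    by rewrite ltrBlDr ltrDl.
  by apply: Lle => z _; have /andP[] := hb z.
- exact: Lmono.
- apply/eqP; rewrite eq_le; apply/andP; split.
    by apply: Lle => z z0; rewrite h0 // ltW.
  by apply: le_trans (Lge (-1) 0 _); [rewrite h0 // lerN10|rewrite ltrN10].
- move=> x; apply/cvgrPdist_le => eps eps0.
  have [_ [z zx <-] hz] := sup_adherent eps0 (hs x).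
  move: zx; rewrite /= in_itv /= => zx.
  near=> t.
  have tz : z < t by near: t; exact: nbhs_left_gt.
  have tx : t < x by near: t; exact: nbhs_left_lt.
  have h1 := Lge _ _ tz.
  have h2 := Lmono _ _ (ltW tx).
  rewrite ger0_norm ?subr_ge0 //; lra.
Unshelve. all: by end_near. Qed.

End Step2.

Section Fwd.
Variable R : realType.
Variable V : lmodType R.
Variable nu : V -> R -> R.
Variables tau taus : (R -> R) -> (R -> R) -> (R -> R).
Hypothesis PN : PN_space nu tau taus.
Hypothesis hD : forall p, in_Dplus (nu p).
Variable A : set V.
Hypothesis hA : A !=set0.

Let tfT : triangle_function tau. Proof. by case: PN => -[]. Qed.
Let ctT : continuous_tf tau. Proof. by case: PN => -[]. Qed.

Definition Iinf (t : R) := inf [set nu q t | q in A].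
Definition RA (x : R) := sup [set Iinf t | t in `]-oo, x[].

Let Tne t : [set nu q t | q in A] !=set0.
Proof. by case: hA => q Aq; exists (nu q t), q. Qed.
Let Tlb t : has_lbound [set nu q t | q in A].
Proof. by exists 0 => w [q _ <-]; exact: D_ge0 (nu_Delta PN q). Qed.

Lemma Iinf_le q t : A q -> Iinf t <= nu q t.
Proof. by move=> Aq; apply: ge_inf (Tlb t) _ _; exists q. Qed.
Lemma Iinf_ge0 t : 0 <= Iinf t.
Proof. by apply: lb_le_inf (Tne t) _ => w [q _ <-]; exact: D_ge0 (nu_Delta PN q). Qed.
Lemma Iinf_mono : {homo Iinf : a b / a <= b}.
Proof.
move=> a b ab; apply: lb_le_inf (Tne b) _ => w [q Aq <-].
exact: le_trans (Iinf_le a Aq) (D_mono (nu_Delta PN q) ab).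
Qed.
Lemma Iinf_b t : 0 <= Iinf t <= 1.
Proof.
rewrite Iinf_ge0 /=; case: hA => q Aq.
exact: le_trans (Iinf_le t Aq) (D_le1 t (nu_Delta PN q)).
Qed.
Lemma Iinf_neg t : t <= 0 -> Iinf t = 0.
Proof.
move=> t0; apply/eqP; rewrite eq_le Iinf_ge0 andbT; case: hA => q Aq.
by rewrite -(D_neg (nu_Delta PN q) t0); exact: Iinf_le.
Qed.

Lemma RA_Delta : in_Delta RA.
Proof. exact: leftsup_Delta Iinf_mono Iinf_b Iinf_neg. Qed.

Lemma prob_radiusE : prob_radius nu A = RA.
Proof.
apply/funext => x; rewrite /prob_radius; apply: cvg_lim; first exact: Rhausdorff.
exact: left_sup Iinf_mono Iinf_b.
Qed.

Lemma RA_le q x : A q -> RA x <= nu q x.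
Proof.
move=> Aq; apply: ge_sup.
  by exists (Iinf (x - 1)), (x - 1) => //=; rewrite in_itv /= ltrBlDr ltrDl.
move=> w [t] /=; rewrite in_itv /= => tx <-.
exact: le_trans (Iinf_le t Aq) (D_mono (nu_Delta PN q) (ltW tx)).
Qed.

Lemma Iinf_le_RA t x : t < x -> Iinf t <= RA x.
Proof.
move=> tx; apply: sup_upper_bound; last by exists t => //=; rewrite in_itv.
split; first by exists (Iinf t), t => //=; rewrite in_itv.
by exists 1 => w [z _ <-]; have /andP[] := Iinf_b z.
Qed.

Lemma compact_closed : D_compact nu A -> strong_closed nu A.
Proof.
move=> hc p pA; apply: contrapT => hn.
have hex n : exists q, A q /\ strong_nbhd nu p (n.+1%:R^-1) q.
  apply: contrapT => hq; apply: hn; exists (n.+1%:R^-1); first by rewrite invr_gt0 ltr0n.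
  by move=> q hq' Aq; apply: hq; exists q.
have [u hu] := choice hex.
have [phi [hphi [a Aa ha]]] := hc u (fun n => (hu n).1).
suff hp : strong_conv nu (u \o phi) p by apply: pA; rewrite (strong_unique PN hp ha).
move=> l l0; exists (Num.truncn (l^-1)) => n Nn.
have hn1 := (hu (phi n)).2; rewrite /strong_nbhd /= in hn1 *.
set k := (phi n).+1%:R^-1 in hn1.
have kl : k <= l.
  rewrite /k -[l]invrK lef_pV2 ?posrE ?ltr0n ?invr_gt0 //.
  apply: ltW; apply: lt_le_trans (truncnS_gt _) _.
  rewrite ler_nat ltnS; apply: leq_trans Nn (homo_ge hphi n).
have := D_mono (nu_Delta PN (p - u (phi n))) kl; lra.
Qed.

Lemma compact_bounded : D_compact nu A -> D_bounded nu A.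
Proof.
move=> hc; rewrite /D_bounded prob_radiusE; split; first exact: RA_Delta.
apply/cvgrPdist_le => e e0.
suff [X hX] : exists X, 1 - e < RA X.
  near=> x; have Xx : X <= x by near: x; apply: nbhs_pinfty_ge; rewrite num_real.
  have h1 := D_mono RA_Delta Xx; have h2 := D_le1 x RA_Delta.
  rewrite ger0_norm ?subr_ge0 //; lra.
apply: contrapT => hn.
have hle X : RA X <= 1 - e by rewrite leNgt; apply/negP => h; apply: hn; exists X.
have e2 : 0 < e / 2 by rewrite divr_gt0.
have hex n : exists q, A q /\ nu q n%:R < 1 - e / 2.
  have [_ [q Aq <-] hq] := inf_adherent e2 (conj (Tne n%:R) (Tlb n%:R)).
  exists q; split => //.
  have h : Iinf n%:R <= RA (n%:R + 1) by apply: Iinf_le_RA; rewrite ltrDl.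
  have := hle (n%:R + 1); rewrite /Iinf in h hq; lra.
have [u hu] := choice hex.
have [phi [hphi [a Aa ha]]] := hc u (fun n => (hu n).1).
have e4 : 0 < e / 4 by rewrite divr_gt0.
have [_ hna] := hD a.
have [M [_ hM]] := (cvgrPdist_lt _ _).1 hna (e / 4) e4.
set y := `|M| + 1.
have hM1 := ler_norm M; have hM2 := normr_ge0 M.
have y0 : 0 < y by rewrite /y; lra.
have My : M < y by rewrite /y; lra.
have hy := hM y My; rewrite /= in hy.
set c := nu a y in hy.
have c1 : c <= 1 by exact: D_le1 y (nu_Delta PN a).
have hc4 : 1 - e / 4 < c by move: hy; rewrite ger0_norm ?subr_ge0 //; lra.
pose G := step2 y c.
have GD : in_Delta G.
  apply: step2_Delta; first exact: ltW.
  by rewrite c1 andbT; exact: D_ge0 (nu_Delta PN a).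
have Gle : dfle G (nu a).
  move=> z; rewrite /G /step2; case: ifP => zy; first exact: D_ge0 (nu_Delta PN a).
  by apply: D_mono (nu_Delta PN a) _; apply: ltW; rewrite ltNge zy.
have c0 : conv0 nu (fun n => u (phi n) - a).
  apply: conv0_ext (conv0_opp PN (proj1 (strong_conv0 PN _ _) ha)) => n.
  by rewrite opprB.
have wG : wconv (fun _ : nat => G) G by move=> x _; exact: cvg_cst.
have w := ctT (fun n => nu_Delta PN (u (phi n) - a)) (fun _ => GD) (@eps0_Delta R) GD
  (conv0_wconv PN c0) wG.
rewrite tf_unitl // in w.
have Gz : G (y + 1) = c by rewrite /G /step2 ifF //; apply/negbTE; rewrite -ltNge ltrDl.
have cz : {for y + 1, continuous G} by apply: step2_cont; rewrite ltrDl.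
have [N1 _ hN1] := (cvgrPdist_lt _ _).1 (w (y + 1) cz) (e / 4) e4.
set n := maxn N1 (Num.truncn (y + 1)).+1.
have h1 := hN1 n (leq_maxl _ _); rewrite /= Gz in h1.
have h2 : tau (nu (u (phi n) - a)) G (y + 1) <= nu (u (phi n)) (y + 1).
  apply: le_trans (tf_mono tfT (nu_Delta PN _) (nu_Delta PN _) GD (nu_Delta PN a)
    (fun z => lexx _) Gle (y + 1)) _.
  by have := nuN3 PN (u (phi n) - a) a (y + 1); rewrite subrK.
have h3 : nu (u (phi n)) (y + 1) <= nu (u (phi n)) (phi n)%:R.
  apply: D_mono (nu_Delta PN _) _; apply: ltW; apply: lt_le_trans (truncnS_gt _) _.
  rewrite ler_nat; apply: leq_trans (leq_maxr N1 _) (homo_ge hphi n).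
have h4 := (hu (phi n)).2.
have h5 := ler_norm (c - tau (nu (u (phi n) - a)) G (y + 1)).
lra.
Unshelve. all: by end_near. Qed.

End Fwd.

Section Seq.
Variable R : realType.

Lemma homo_ltn_comp (f g : nat -> nat) : {homo f : m n / (m < n)%N} ->
  {homo g : m n / (m < n)%N} -> {homo f \o g : m n / (m < n)%N}.
Proof. by move=> hf hg m n mn; apply: hf; exact: hg. Qed.

Lemma incr_homo (f : nat -> nat) : increasing_seq f -> {homo f : m n / (m < n)%N}.
Proof.
move=> hf0 m n mn.
have hf : forall a b, (f a <= f b)%N = (a <= b)%N := hf0.
rewrite ltn_neqAle; apply/andP; split.
  apply/negP => /eqP e; have : (n <= m)%N by rewrite -hf e.
  by rewrite leqNgt mn.
by rewrite hf ltnW.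
Qed.

Lemma cvg_subseq_homo (u : nat -> R) (l : R) (f : nat -> nat) : {homo f : m n / (m < n)%N} ->
  u n @[n --> \oo] --> l -> (u \o f) n @[n --> \oo] --> l.
Proof.
move=> hf hu; apply/cvgrPdist_lt => e e0.
move/cvgrPdist_lt: hu => /(_ e e0) [N _ hN].
near=> n; have Nn : (N <= n)%N by near: n; exact: nbhs_infty_ge.
by apply: hN; exact: leq_trans Nn (homo_ge hf n).
Unshelve. all: by end_near. Qed.

Lemma bw_fin k (d : nat -> 'I_k -> R) (B : R) : (forall n i, `|d n i| <= B) ->
  exists phi : nat -> nat, {homo phi : m n / (m < n)%N} /\
    forall i, cvgn (fun n => d (phi n) i).
Proof.
move=> hB.
suff : forall j, (j <= k)%N -> exists phi : nat -> nat, {homo phi : m n / (m < n)%N} /\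
    forall i : 'I_k, (i < j)%N -> cvgn (fun n => d (phi n) i).
  move=> /(_ k (leqnn k)) [phi [hphi hc]]; exists phi; split => // i.
  exact: hc (ltn_ord i).
elim=> [|j ih] jk.
  by exists id; split => // m n.
have [phi [hphi hc]] := ih (ltnW jk).
pose i0 : 'I_k := Ordinal jk.
have bd : bounded_fun (fun n => d (phi n) i0).
  rewrite /bounded_near; near=> M => n _ /=; apply: le_trans (hB _ _) _.
  by near: M; apply: nbhs_pinfty_ge; rewrite num_real.
have [psi hpsi hc0] := bolzano_weierstrass bd.
exists (phi \o psi); split; first exact: homo_ltn_comp (incr_homo hpsi).
move=> i; rewrite ltnS leq_eqVlt => /orP[/eqP ei|ij].
  have -> : i = i0 by apply: val_inj.
  exact: hc0.
apply/cvg_ex; exists (limn (fun n => d (phi n) i)).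
exact: (cvg_subseq_homo (incr_homo hpsi) (hc i ij)).
Unshelve. all: by end_near. Qed.

End Seq.

Section Bwd.
Variable R : realType.
Variable V : vectType R.
Variable nu : V -> R -> R.
Variables tau taus : (R -> R) -> (R -> R) -> (R -> R).
Hypothesis PN : PN_space nu tau taus.
Hypothesis archS : archimedean_tf taus.
Hypothesis nne : forall p, nu p <> epsinf.
Hypothesis hD : forall p, in_Dplus (nu p).
Variable A : set V.
Hypothesis hA : A !=set0.

Let tfS : triangle_function taus. Proof. by case: PN => -[]. Qed.
Let ctS : continuous_tf taus. Proof. by case: PN => -[]. Qed.

Let n0 := \dim (fullv : {vspace V}).
Let e := vbasis (fullv : {vspace V}).
Let c (i : 'I_n0) (v : V) : R := coord e i v.

Let decomp v : v = \sum_(i < n0) c i v *: e`_i.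
Proof. exact: coord_vbasis (memvf v). Qed.
Let efree : free e. Proof. exact: basis_free (vbasisP fullv). Qed.

Lemma conv0_sum (f : 'I_n0 -> nat -> V) : (forall i, conv0 nu (f i)) ->
  conv0 nu (fun n => \sum_(i < n0) f i n).
Proof.
move=> hf.
suff h : forall s : seq 'I_n0, conv0 nu (fun n => \sum_(i <- s) f i n) by exact: h.
elim=> [|i s ih].
  by apply: conv0_ext (conv0_cst0 PN) => n; rewrite big_nil.
by apply: conv0_ext (conv0_add PN (hf i) ih) => n; rewrite big_cons.
Qed.

Lemma cvg_sumf k (f : 'I_k -> nat -> R) (l : 'I_k -> R) :
  (forall i, f i n @[n --> \oo] --> l i) ->
  (\sum_(i < k) f i n) @[n --> \oo] --> \sum_(i < k) l i.
Proof.
move=> hf.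
suff h : forall s : seq 'I_k, (\sum_(i <- s) f i n) @[n --> \oo] --> \sum_(i <- s) l i.
  exact: h.
elim=> [|i s ih].
  rewrite big_nil; under eq_fun do rewrite big_nil; exact: cvg_cst.
rewrite big_cons; under eq_fun do rewrite big_cons; exact: cvgD.
Qed.

Lemma conv0_coord (l : 'I_n0 -> R) (x : nat -> V) :
  (forall i, c i (x n) @[n --> \oo] --> l i) ->
  conv0 nu (fun n => (\sum_(i < n0) l i *: e`_i) - x n).
Proof.
move=> hx.
apply: (conv0_ext (f := fun n => \sum_(i < n0) (l i - c i (x n)) *: e`_i)).
  move=> n; rewrite {2}(decomp (x n)) -sumrB; apply: eq_bigr => i _.
  by rewrite scalerBl.
apply: conv0_sum => i.
have hc : (l i - c i (x n)) @[n --> \oo] --> (0 : R).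
  rewrite -(subrr (l i)); apply: cvgB; [exact: cvg_cst|exact: hx].
exact: (tv PN archS (@nne e`_i) hc).
Qed.


Lemma D_bdd_coord : D_bounded nu A -> forall u : nat -> V, (forall n, A (u n)) ->
  exists B, forall n i, `|c i (u n)| <= B.
Proof.
move=> hb u hu; apply: contrapT => hnb.
pose S n := \sum_(i < n0) `|c i (u n)|.
have Sge i n : `|c i (u n)| <= S n.
  by rewrite /S (bigD1 i) //= lerDl sumr_ge0.
have hex N : exists n, N.+1%:R <= S n.
  apply: contrapT => h; apply: hnb; exists N.+1%:R => n i.
  apply: le_trans (Sge i n) _; rewrite leNgt; apply/negP => hl; apply: h; exists n.
  exact: ltW.
have [g hg] := choice hex.
pose T N := S (g N).
have T0 N : 0 < T N by apply: lt_le_trans (hg N); rewrite ltr0n.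
pose d N i := c i (u (g N)) / T N.
have hd N i : `|d N i| <= 1.
  rewrite /d normrM normfV (gtr0_norm (T0 N)) ler_pdivrMr // mul1r; exact: Sge.
have [psi [hpsi hcv]] := bw_fin hd.
pose l i := limn (fun N => d (psi N) i).
have hl i : (fun N => d (psi N) i) @ \oo --> l i := hcv i.
have sum1 N : \sum_(i < n0) `|d N i| = 1.
  rewrite /d; under eq_bigr do rewrite normrM normfV (gtr0_norm (T0 N)).
  have dn i : `|d N i| = `|c i (u (g N))| / T N.
    by rewrite /d normrM normfV (gtr0_norm (T0 N)).
  rewrite (eq_bigr (fun i => `|c i (u (g N))| / T N)) //.
  by rewrite -mulr_suml; apply: divff; exact: lt0r_neq0 (T0 N).
have suml : \sum_(i < n0) `|l i| = 1.
  have h : (\sum_(i < n0) `|d (psi N) i|) @[N --> \oo] --> \sum_(i < n0) `|l i|.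
    by apply: cvg_sumf => i; apply: cvg_norm; exact: hl.
  have e1 : (fun N => \sum_(i < n0) `|d (psi N) i|) = fun _ => 1.
    by apply/funext => N; rewrite sum1.
  rewrite e1 in h.
  apply/eqP; rewrite eq_le; apply/andP; split.
    by apply: (ler_cvg_to h (cvg_cst (1 : R))); apply: nearW.
  by apply: (ler_cvg_to (cvg_cst (1 : R)) h); apply: nearW.
have [i0 li0] : exists i0, l i0 != 0.
  apply: contrapT => h.
  have : \sum_(i < n0) `|l i| = 0.
    apply: big1 => i _; suff -> : l i = 0 by rewrite normr0.
    by apply: contrapT => hi; apply: h; exists i; apply/eqP.
  by rewrite suml => /eqP; rewrite oner_eq0.
pose w := \sum_(i < n0) l i *: e`_i.
have w0 : w != 0.
  apply/negP => /eqP hw; have := coord_sum_free l i0 efree.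
  by rewrite -/w hw linear0 => /esym /eqP; rewrite (negbTE li0).
pose wN N := (T (psi N))^-1 *: u (g (psi N)).
have cwN N i : c i (wN N) = d (psi N) i by rewrite /c /= linearZ /= mulrC.
have cw : conv0 nu (fun N => w - wN N).
  apply: conv0_coord => i.
  have -> : (fun N => c i (wN N)) = (fun N => d (psi N) i).
    by apply/funext => N; rewrite cwN.
  exact: hl.
have nc : ~ conv0 nu wN.
  move=> h; move/negP: w0; apply; apply/eqP; apply: (conv0_eq0 PN).
  by apply: conv0_ext (conv0_add PN cw h) => N; rewrite subrK.
apply: nc => x0 dl x00 dl0.
have [dl1|dl1] := leP dl 1; last first.
  by exists 0%N => n _; have := D_ge0 x0 (nu_Delta PN (wN n)); lra.
apply: contrapT => hN.
have [RD Rlim] := hb; rewrite (prob_radiusE PN hA) in RD Rlim.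
have h2 : 0 < 1 / 2 :> R by rewrite divr_gt0.
have [M [_ hM]] := (cvgrPdist_lt _ _).1 Rlim _ h2.
set y := `|M| + 1.
have hM1 := ler_norm M.
have My : M < y by rewrite /y; lra.
have hy := hM y My; rewrite /= in hy.
have Ry : 0 < RA nu A y.
  have := ler_norm (1 - RA nu A y); lra.
pose G := step3 0 x0 (1 - dl).
have GD : in_Delta G by apply: step3_Delta => //; [exact: ltW | apply/andP; split; lra].
have Gx : G x0 < 1.
  by rewrite /G /step3 ifF ?lexx; [lra|apply/negbTE; rewrite -ltNge].
have [m hm] := arch_pw tfS ctS archS GD x00 Gx y Ry.
have [n [mn hn]] : exists n, (m <= n)%N /\ nu (wN n) x0 <= 1 - dl.
  apply: contrapT => h; apply: hN; exists m => n mn; rewrite ltNge; apply/negP => h'.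
  by apply: h; exists n.
have hG : dfle (nu (wN n)) G.
  move=> z; rewrite /G /step3; case: ifP => z0.
    by rewrite (D_neg (nu_Delta PN _) z0).
  case: ifP => zx; first exact: le_trans (D_mono (nu_Delta PN _) zx) hn.
  exact: D_le1 (nu_Delta PN _).
have mt : m%:R * (T (psi n))^-1 <= 1.
  rewrite -[_ * _^-1]/(_ / _) ler_pdivrMr // mul1r.
  apply: le_trans (hg (psi n)); rewrite ler_nat.
  exact: leq_trans (leq_trans mn (homo_ge hpsi n)) (leqnSn _).
have tp : 0 < (T (psi n))^-1 by rewrite invr_gt0.
have k1 := nu_pw PN (u (g (psi n))) tp mt y.
have k2 := pw_mono tfS m (nu_Delta PN _) GD hG y.
have k3 := RA_le PN y (hu (g (psi n))).
have k1' : nu (u (g (psi n))) y <= pw taus (nu (wN n)) m y by exact: k1.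
lra.
Qed.

Lemma bounded_closed_compact : D_bounded nu A -> strong_closed nu A -> D_compact nu A.
Proof.
move=> hb hcl u hu.
have [B hB] := D_bdd_coord hb hu.
have [phi [hphi hcv]] := bw_fin (d := fun n i => c i (u n)) hB.
pose l i := limn (fun n => c i (u (phi n))).
pose v := \sum_(i < n0) l i *: e`_i.
have hv : strong_conv nu (u \o phi) v.
  by apply/(strong_conv0 PN); apply: conv0_coord => i; exact: hcv.
exists phi; split => //; exists v => //.
apply: contrapT => nv.
have [r r0 hr] := hcl v nv.
have [N hN] := hv r r0.
exact: (hr _ (hN N (leqnn N))) (hu (phi N)).
Qed.

End Bwd.

Unset Implicit Arguments.

Theorem theorem28 (R : realType) (V : vectType R) (nu : V -> R -> R)
    (tau taus : (R -> R) -> (R -> R) -> (R -> R))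
    (nu' : R^o -> R -> R) (tau' taus' : (R -> R) -> (R -> R) -> (R -> R)) :
  PN_space nu tau taus ->
  archimedean_tf taus ->
  (forall p, nu p <> epsinf) ->
  (forall p, in_Dplus (nu p)) ->
  (forall F G, in_Dplus F -> in_Dplus G -> in_Dplus (tau F G)) ->
  PN_space nu' tau' taus' ->
  archimedean_tf taus' ->
  (forall r, nu' r <> epsinf) ->
  LG_property nu' ->
  forall A : set V, A !=set0 ->
    D_compact nu A <-> D_bounded nu A /\ strong_closed nu A.
Proof.
move=> PN archS nne hD _ _ _ _ _ A hA; split.
- move=> hc; split; first exact: (compact_bounded PN hD hA hc).
  exact: (compact_closed PN hc).
- case=> hb hcl; exact: (bounded_closed_compact PN archS nne hA hb hcl).
Qed.
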